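(* Let $R$ be a ring. Let $P$ be a polygon divided into subpolygons $P^1$ and $P^2$ by the dissection $\{(t,v),(v,t)\}$; let $V^\alpha$ be the vertex set of $P^\alpha$ and $U^\alpha=V^\alpha\setminus\{t,v\}$. Let $D^2$ be a dissection of $P^2$ and $D=\{(t,v),(v,t)\}\,\dot\cup\,D^2$. Let $c:\operatorname{diag}P\to R$ be a map with $c_{rs}\in R^*$ for all $(r,s)\in D$. Assume that $c|_{\operatorname{diag}P^2}$ satisfies the $T$-path formula with respect to $D^2$ (i.e. $c_{ik}=\sum_{p\in\mathscr{P}(D^2,i,k)}c_p$ for all distinct vertices $i,k$ of $P^2$, with $T$-paths taken in $P^2$), and that $c$ is a weak frieze with respect to $\{(t,v),(v,t)\}$. Then for all $i\in U^1$ and $k\in U^2$, \[ c_{ik}=\sum_{p\in\mathscr{P}(D,i,k)}c_p. \]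
   Context: $R^*$ denotes the invertible elements of $R$. A polygon is a finite set of at least three vertices with a cyclic ordering, thought of as a convex polygon in the plane; a subpolygon is a subset of at least three vertices with induced cyclic ordering. $\operatorname{diag}P$ is the set of ordered pairs of distinct vertices; internal diagonals are those whose endpoints are not neighbours. $(i,k)$ and $(j,\ell)$ cross if $i,j,k,\ell$ are pairwise distinct with $i<j<k<\ell$ or $i<\ell<k<j$ cyclically. A dissection is a set of internal diagonals closed under reversal with no two crossing; the pair $\{(t,v),(v,t)\}$ divides $P$ into the subpolygons $P^1,P^2$ whose vertex sets are the vertices on either side of $(t,v)$ together with $t,v$. Write $c_{ik}=c(i,k)$, $c_{xx}=0$. A map $c$ is a weak frieze with respect to a dissection $E$ if $c_{rs}\in R^*$ for $(r,s)\in E$ and whenever $(i,k)$ crosses $(r,s)$ with $(r,s),(s,r)\in E$, $c_{ik}=c_{ir}c_{sr}^{-1}c_{sk}+c_{is}c_{rs}^{-1}c_{rk}$. For a polygon $Q$ with dissection $D$, a sequence $(p_1,\ldots,p_\pi)$ of vertices of $Q$ is a $T$-path from $p_1$ to $p_\pi$ with respect to $D$ if: $p_1\ne p_\pi$; the sets $\{p_\alpha,p_{\alpha+1}\}$ are pairwise different 2-element sets; no $(p_\alpha,p_{\alpha+1})$ crosses a diagonal of $D$; each $(p_{2\alpha},p_{2\alpha+1})$ is in $D$ and crosses $(p_1,p_\pi)$, with crossing points progressing monotonically from $p_1$ to $p_\pi$. $\mathscr{P}(D,i,k)$ is the set of such $T$-paths from $i$ to $k$, and $c_p=c_{p_1p_2}c_{p_3p_2}^{-1}c_{p_3p_4}\cdots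 c_{p_{\pi-1}p_{\pi-2}}^{-1}c_{p_{\pi-1}p_\pi}$. *)

(* Defs.v *)
From mathcomp Require Import all_boot all_algebra.
Set Implicit Arguments. Unset Strict Implicit. Unset Printing Implicit Defensive.
Import GRing.Theory.

Section Polygon.
Variable n : nat.
(* The polygon P has vertex set 'I_n with the cyclic order 0 < 1 < ... < n-1 < 0. *)
Implicit Types (a b x y z i k : 'I_n) (V : {set 'I_n}) (D E : {set 'I_n * 'I_n}).

(* b lies strictly between a and c when going cyclically forward from a to c *)
Definition cyc a b c : bool :=
  [|| (a < b < c)%N, (b < c < a)%N | (c < a < b)%N].

(* (i,k) and (j,l) cross: pairwise distinct and i<j<k<l or i<l<k<j cyclically *)
Definition cross i k j l : bool :=
  uniq [:: i; k; j; l] && (cyc i j k != cyc i l k).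

(* neighbours in the subpolygon with vertex set V (induced cyclic order) *)
Definition neighbours V x y : bool :=
  [&& x \in V, y \in V, x != y &
      [forall z in V, ~~ cyc x z y] || [forall z in V, ~~ cyc y z x]].

Definition internal_diag V (d : 'I_n * 'I_n) : bool :=
  [&& d.1 \in V, d.2 \in V, d.1 != d.2 & ~~ neighbours V d.1 d.2].

Definition dissection V D : Prop :=
  [/\ forall d, d \in D -> internal_diag V d,
      forall d, d \in D -> (d.2, d.1) \in D &
      forall d e, d \in D -> e \in D -> ~~ cross d.1 d.2 e.1 e.2].

Definition weak_frieze (R : unitRingType) (c : 'I_n -> 'I_n -> R) E : Prop :=
  (forall rs, rs \in E -> c rs.1 rs.2 \is a GRing.unit) /\
  (forall i k r s, (r, s) \in E -> (s, r) \in E -> cross i k r s ->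
     c i k = (c i r * (c s r)^-1 * c s k + c i s * (c r s)^-1 * c r k)%R).

(* x lies strictly on the same side of the diagonal (a,b) as i *)
Definition strict_side a b i x : bool :=
  [&& x != a, x != b & cyc a x b == cyc a i b].

(* For two non-crossing diagonals d, e both crossing a diagonal starting at i:
   the crossing point of d comes strictly before that of e (seen from i) *)
Definition before i (d e : 'I_n * 'I_n) : bool :=
  [&& ~~ strict_side d.1 d.2 i e.1, ~~ strict_side d.1 d.2 i e.2,
      e != d & e != (d.2, d.1)].

Definition steps (s : seq 'I_n) : seq ('I_n * 'I_n) := zip s (behead s).

(* s = (p_1,...,p_pi) is a T-path from i to k in the (sub)polygon V w.r.t. D.
   0-based step index j corresponds to the 1-based step alpha = j+1, so the
   steps (p_(2a), p_(2a+1)) are those with odd j. *)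
Definition is_tpath V D i k (s : seq 'I_n) : bool :=
  let st := steps s in
  [&& (2 <= size s)%N, nth i s 0 == i, last i s == k, i != k,
      all (fun x => x \in V) s,
      all (fun e => e.1 != e.2) st,
      uniq [seq [set e.1; e.2] | e <- st],
      all (fun e => [forall d in D, ~~ cross e.1 e.2 d.1 d.2]) st,
      all (fun j => odd j ==> ((nth (i, i) st j \in D) &&
                               cross i k (nth (i, i) st j).1 (nth (i, i) st j).2))
          (iota 0 (size st)) &
      all (fun j1 => all (fun j2 =>
             [&& odd j1, odd j2 & (j1 < j2)%N] ==>
               before i (nth (i, i) st j1) (nth (i, i) st j2))
           (iota 0 (size st))) (iota 0 (size st))].

(* c_p = c_{p1p2} c_{p3p2}^-1 c_{p3p4} ... c_{p(pi-1)p(pi-2)}^-1 c_{p(pi-1)p(pi)} *)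
Fixpoint tweight (R : unitRingType) (c : 'I_n -> 'I_n -> R) (s : seq 'I_n) : R :=
  match s with
  | a :: b :: ((d :: _) as rest) => (c a b * (c d b)^-1 * tweight c rest)%R
  | [:: a; b] => c a b
  | _ => 0%R
  end.

(* Bound on the length of T-paths: their steps are pairwise different
   2-element subsets of an n-element set, so they have < n*n + 2 vertices. *)
Definition tpath_bound : nat := (n * n).+2.

Definition tsum (R : unitRingType) V D (c : 'I_n -> 'I_n -> R) i k : R :=
  (\sum_(m < tpath_bound) \sum_(p : m.-tuple 'I_n | is_tpath V D i k p)
      tweight c p)%R.

Definition V2 t v : {set 'I_n} := [set x | [|| x == t, x == v | cyc t x v]].
Definition V1 t v : {set 'I_n} := [set x | [|| x == t, x == v | cyc v x t]].
Definition U1 t v : {set 'I_n} := V1 t v :\: [set t; v].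
Definition U2 t v : {set 'I_n} := V2 t v :\: [set t; v].

End Polygon.

(* Main.v *)
Require Import Defs.
From mathcomp Require Import all_boot all_algebra.
From mathcomp Require Import zify.
Import GRing.Theory.
Set Implicit Arguments. Unset Strict Implicit. Unset Printing Implicit Defensive.

Fixpoint alt {T} (b : bool) (l : seq T) : seq T :=
  match l with [::] => [::] | x :: l' => if b then x :: alt (~~ b) l' else alt (~~ b) l' end.
Definition odds {T} (l : seq T) := alt false l.

Lemma iotaS0 m : iota 0 m.+1 = 0 :: map S (iota 0 m).
Proof. by rewrite /= -(iotaDl 1 0). Qed.

Lemma altE T (d : T) (P : pred T) l p :
  all (fun j => odd (p + j) ==> P (nth d l j)) (iota 0 (size l)) = all P (alt (odd p) l).
Proof.
elim: l p => [|x l IH] p; first by [].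
rewrite [size _]/= iotaS0 /= addn0 all_map.
have -> : all (preim S (fun j => odd (p + j) ==> P (nth d (x :: l) j))) (iota 0 (size l))
   = all (fun j => odd (p.+1 + j) ==> P (nth d l j)) (iota 0 (size l)).
  by apply: eq_all => j /=; rewrite addnS /= ?andbT.
rewrite IH /=; case: (odd p) => //=.
Qed.

Lemma alt2E T (d : T) (r : rel T) l p :
  all (fun j1 => all (fun j2 => [&& odd (p + j1), odd (p + j2) & (j1 < j2)%N] ==>
        r (nth d l j1) (nth d l j2)) (iota 0 (size l))) (iota 0 (size l))
  = pairwise r (alt (odd p) l).
Proof.
elim: l p => [|x l IH] p; first by [].
rewrite [size _]/= iotaS0 /= addn0 !all_map /=.
have -> : all (preim S (fun j2 => [&& odd p, odd (p + j2) & (0 < j2)%N] ==>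
     r x (nth d (x :: l) j2))) (iota 0 (size l))
   = (odd p ==> all (r x) (alt (odd p.+1) l)).
  rewrite -(altE d); case: (odd p) => /=; last by apply/allP => j _.
  by apply: eq_all => j /=; rewrite addnS /= ?andbT.
set C := all (preim S _) _.
have -> : C = pairwise r (alt (odd p.+1) l).
  rewrite -IH; apply: eq_all => j1 /=; rewrite ltn0 !andbF /= all_map.
  by apply: eq_all => j2 /=; rewrite !addnS /=.
rewrite ltnn !andbF /=; by case: (odd p).
Qed.

Lemma oddsE T (d : T) (P : pred T) l :
  all (fun j => odd j ==> P (nth d l j)) (iota 0 (size l)) = all P (odds l).
Proof. exact: (altE d P l 0). Qed.

Lemma odds2E T (d : T) (r : rel T) l :
  all (fun j1 => all (fun j2 => [&& odd j1, odd j2 & (j1 < j2)%N] ==>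
        r (nth d l j1) (nth d l j2)) (iota 0 (size l))) (iota 0 (size l))
  = pairwise r (odds l).
Proof. exact: (alt2E d r l 0). Qed.

Lemma odds_cons2 T (x y : T) l : odds (x :: l) = odds (y :: l).
Proof. by []. Qed.
Lemma odds_cc T (x y : T) l : odds (x :: y :: l) = y :: odds l.
Proof. by []. Qed.

Section Gen.
Variable n : nat.
Implicit Types (s : seq 'I_n).

Definition setof (e : 'I_n * 'I_n) : {set 'I_n} := [set e.1; e.2].

Lemma steps_cc (x y : 'I_n) l : steps (x :: y :: l) = (x, y) :: steps (y :: l).
Proof. by []. Qed.

Lemma size_steps s : size (steps s) = (size s).-1.
Proof. by rewrite /steps size_zip size_behead; apply/minn_idPr; rewrite leq_pred. Qed.

Lemma mem_steps s e : e \in steps s -> (e.1 \in s) && (e.2 \in s).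
Proof.
elim: s => [|x [|y l] IH] //= .
rewrite steps_cc in_cons => /orP [/eqP -> |/IH]; first by rewrite /= !in_cons !eqxx orbT.
rewrite !in_cons => /andP [-> ->]; by rewrite !orbT.
Qed.

Lemma mem_steps_behead s e : e \in steps s -> (e.2 \in behead s).
Proof.
case: s => [|x [|y l]] //=; rewrite steps_cc in_cons => /orP [/eqP -> |/mem_steps/andP[_ ->]] //.
by rewrite /= in_cons eqxx.
Qed.

Lemma vertex s d x : x \in behead s ->
  x = last d s \/ exists2 e, e \in odds (steps s) & (x = e.1 \/ x = e.2).
Proof.
move=> H; have [m] := ubnP (size s); elim: m s d H => // m IH [|y [|z [|w l]]] d //=.
- by rewrite in_cons in_nil orbF => /eqP -> _; left.
- rewrite in_cons => /orP [/eqP -> _|]; first by right; exists (z, w) => //=; [rewrite in_cons eqxx | left].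
  rewrite in_cons => /orP [/eqP -> _|]; first by right; exists (z, w) => //=; [rewrite in_cons eqxx | right].
  move=> xl Hs.
  have H' : (size (w :: l) < m)%N by move: Hs => /=; rewrite ltnS => /ltnW.
  case: (IH (w :: l) d xl H') => [->|[e He Hx]].
  + by left.
  + by right; exists e => //; rewrite steps_cc odds_cc in_cons He orbT.
Qed.

Lemma size_bound s : uniq [seq setof e | e <- steps s] -> (size s < (n * n).+2)%N.
Proof.
move=> U.
have : (size [seq setof e | e <- steps s] <=
        size [seq setof e | e <- allpairs pair (enum 'I_n) (enum 'I_n)])%N.
  apply: uniq_leq_size => // X /mapP [e _ ->]; apply/mapP; exists e => //.
  by case: e => x y; apply: allpairs_f; rewrite mem_enum.
rewrite !size_map size_steps size_allpairs size_enum_ord.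
by case: (size s) => //= m; rewrite ltnS => ->.
Qed.

Definition Fm m : seq (seq 'I_n) := [seq val p | p <- enum {: m.-tuple 'I_n}].
Definition LL B := flatten [seq Fm m | m <- iota 0 B].

Lemma mem_Fm m s : (s \in Fm m) = (size s == m).
Proof.
apply/mapP/idP => [[p _ ->]|/eqP H]; first by rewrite size_tuple.
have H' : size s == m by rewrite H.
by exists (Tuple H'); rewrite ?mem_enum.
Qed.

Lemma mem_LL B s : (s \in LL B) = (size s < B)%N.
Proof.
elim: B => [|B IH]; first by [].
rewrite /LL -addn1 iotaD map_cat flatten_cat mem_cat -/(LL B) IH /= cats0 mem_Fm add0n.
lia.
Qed.

Lemma uniq_LL B : uniq (LL B).
Proof.
elim: B => [|B IH] //.
rewrite /LL -addn1 iotaD map_cat flatten_cat cat_uniq -/(LL B) IH /= cats0 add0n.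
apply/andP; split.
  apply/hasPn => s; rewrite mem_Fm mem_LL => /eqP ->; by rewrite ltnn.
rewrite map_inj_uniq ?enum_uniq //; exact: val_inj.
Qed.

Lemma tsumL (R : unitRingType) V D (c : 'I_n -> 'I_n -> R) i k :
  tsum V D c i k = (\sum_(s <- LL (tpath_bound n) | is_tpath V D i k s) tweight c s)%R.
Proof.
rewrite /tsum /LL big_flatten big_map.
have -> : iota 0 (tpath_bound n) = index_iota 0 (tpath_bound n) by rewrite /index_iota subn0.
rewrite big_mkord; apply: eq_bigr => m _; rewrite /Fm big_map.
by rewrite big_enum_cond.
Qed.

End Gen.

Section Geo.
Variable n : nat.
Implicit Types (a b x y z i k t v : 'I_n).

Ltac geoH := repeat match goal with H : is_true (cyc _ _ _) |- _ => move: H end; rewrite /U1 /U2 /V1 /V2 /cross /strict_side /cyc /= ?inE -?val_eqE /=; lia.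
Ltac geo := rewrite /U1 /U2 /V1 /V2 /cross /strict_side /cyc /= ?inE -?val_eqE /=; lia.

Lemma cross_sym i k j l : cross i k j l = cross j l i k.
Proof. geo. Qed.

Lemma U1P t v x : x \in U1 t v -> [&& x != t, x != v, x \in V1 t v & x \notin V2 t v].
Proof. geo. Qed.
Lemma U2P t v x : x \in U2 t v -> [&& x != t, x != v, x \in V2 t v & x \notin V1 t v].
Proof. geo. Qed.
Lemma U2I t v x : x \in V2 t v -> x != t -> x != v -> x \in U2 t v.
Proof. geo. Qed.
Lemma tvV t v : [&& t \in V1 t v, v \in V1 t v, t \in V2 t v & v \in V2 t v].
Proof. geo. Qed.

Lemma G1 t v x y : x \in U1 t v -> y \in U2 t v -> cross x y t v && cross x y v t.
Proof. geo. Qed.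

Lemma G2 t v p q x y : p \in V1 t v -> q \in V1 t v -> x \in V2 t v -> y \in V2 t v ->
  ~~ cross p q x y.
Proof. rewrite /V1 /V2 !inE => /or3P [/eqP->|/eqP->|Hp] /or3P [/eqP->|/eqP->|Hq]; geoH. Qed.

Lemma H1 t v x i k : x \in V2 t v -> x != v -> i \in U1 t v -> k \in U2 t v -> cyc v x k = cyc i x k.
Proof. geoH. Qed.
Lemma H2 t v x i k : x \in V2 t v -> x != t -> i \in U1 t v -> k \in U2 t v -> cyc t x k = cyc i x k.
Proof. geoH. Qed.
Lemma K1 t v x y i : x \in V2 t v -> y \in V2 t v -> x != v -> y != v -> i \in U1 t v -> cyc x v y = cyc x i y.
Proof. geoH. Qed.
Lemma K2 t v x y i : x \in V2 t v -> y \in V2 t v -> x != t -> y != t -> i \in U1 t v -> cyc x t y = cyc x i y.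
Proof. geoH. Qed.

Lemma G4 t v b x y i : (b == t) || (b == v) -> x \in V2 t v -> y \in V2 t v ->
  x != b -> y != b -> i \in U1 t v -> cyc x b y = cyc x i y.
Proof. by case/orP => /eqP ->; [exact: K2 | exact: K1]. Qed.

Lemma H12 t v b x i k : (b == t) || (b == v) -> x \in V2 t v -> x != b ->
   i \in U1 t v -> k \in U2 t v -> cyc b x k = cyc i x k.
Proof. by case/orP => /eqP ->; [exact: H2 | exact: H1]. Qed.

Lemma G3 t v b x y i k : (b == t) || (b == v) -> x \in V2 t v -> y \in V2 t v ->
  x != b -> y != b -> i \in U1 t v -> k \in U2 t v -> cross b k x y = cross i k x y.
Proof.
move=> Hb Hx Hy xb yb Hi Hk.
rewrite /cross (H12 Hb Hx xb Hi Hk) (H12 Hb Hy yb Hi Hk); congr (_ && _).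
have /and4P [it iv _ iV] := U1P Hi.
have /and4P [kt kv _ _] := U2P Hk.
have ix : i != x by apply: contraNneq iV => ->.
have iy : i != y by apply: contraNneq iV => ->.
have bk : b != k by case/orP: Hb => /eqP ->; rewrite eq_sym.
have /and4P [_ _ kV _] := U2P Hk.
have ik : i != k by apply: contraNneq iV => ->.
have bx : b != x by rewrite eq_sym.
have bY : b != y by rewrite eq_sym.
by rewrite /= !inE (negbTE bk) (negbTE bx) (negbTE bY) (negbTE ik) (negbTE ix) (negbTE iy).
Qed.

Lemma G5 t v x i : x \in V2 t v -> i \in U1 t v ->
  ~~ strict_side t v i x && ~~ strict_side v t i x.
Proof. geo. Qed.

Lemma crossD i k x y : cross i k x y -> [&& x != i, x != k, y != i, y != k & x != y].
Proof. geo. Qed.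

Lemma G7 t v : t != v -> neighbours (V2 t v) t v && neighbours (V2 t v) v t.
Proof.
move=> tv; have /and4P [_ _ Ht Hv] := tvV t v.
rewrite /neighbours Ht Hv tv eq_sym tv /=; apply/andP; split; apply/orP.
- by right; apply/forall_inP => z; geo.
- by left; apply/forall_inP => z; geo.
Qed.
End Geo.

Definition tp n (V : {set 'I_n}) (D : {set 'I_n * 'I_n}) (i k : 'I_n) (s : seq 'I_n) : bool :=
  let st := steps s in
  [&& (2 <= size s)%N, nth i s 0 == i, last i s == k, i != k,
      all (fun x => x \in V) s,
      all (fun e => e.1 != e.2) st,
      uniq [seq setof e | e <- st],
      all (fun e => [forall d in D, ~~ cross e.1 e.2 d.1 d.2]) st,
      all (fun e => (e \in D) && cross i k e.1 e.2) (odds st) &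
      pairwise (before i) (odds st)].

Lemma tpE n V D (i k : 'I_n) s : is_tpath V D i k s = tp V D i k s.
Proof.
rewrite /is_tpath /tp.
rewrite (oddsE (i, i) (fun e => (e \in D) && cross i k e.1 e.2)).
by rewrite (odds2E (i, i) (before i)).
Qed.

Lemma sum_bij (T : eqType) (R : zmodType) (L : seq T) (P Q : pred T) (f g : T -> T)
   (w w' : T -> R) :
  uniq L -> (forall s, P s -> s \in L) -> (forall s, Q s -> s \in L) ->
  (forall s, P s -> Q (f s)) -> (forall s, Q s -> P (g s)) ->
  (forall s, P s -> g (f s) = s) -> (forall s, Q s -> f (g s) = s) ->
  (forall s, P s -> w s = w' (f s)) ->
  (\sum_(s <- L | P s) w s = \sum_(s <- L | Q s) w' s)%R.
Proof.
move=> UL PL QL PQ QP gf fg Hw.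
rewrite -big_filter -[RHS]big_filter.
rewrite (eq_big_seq (fun s => w' (f s))); last first.
  by move=> s; rewrite mem_filter => /andP [Ps _]; exact: Hw.
rewrite -(big_map f xpredT w'); apply: perm_big; apply: uniq_perm.
- rewrite map_inj_in_uniq ?filter_uniq // => x y.
  rewrite !mem_filter => /andP [Px _] /andP [Py _] E.
  by rewrite -(gf x Px) -(gf y Py) E.
- exact: filter_uniq.
- move=> x; apply/mapP/idP.
  + move=> [y]; rewrite mem_filter => /andP [Py _] ->.
    by rewrite mem_filter PQ //= QL // PQ.
  + rewrite mem_filter => /andP [Qx _]; exists (g x); last by rewrite fg.
    by rewrite mem_filter QP //= PL // QP.
Qed.

Lemma pairwise_in (T : eqType) (r r' : rel T) (Pr : pred T) l :
  all Pr l -> (forall x y, Pr x -> Pr y -> r x y -> r' x y) -> pairwise r l -> pairwise r' l.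
Proof.
move=> HA H; elim: l HA => [|x l IH] // HA.
have /andP [Px Al] : Pr x && all Pr l by [].
rewrite !pairwise_cons => /andP [Hx Hl]; apply/andP; split; last exact: IH.
apply/allP => y yl.
have Py : Pr y by move/allP: Al => /(_ y yl).
have Rxy : r x y by move/allP: Hx => /(_ y yl).
exact: H.
Qed.

Arguments steps : simpl never.

Section Core.
Variables (n : nat) (t v : 'I_n) (D2 : {set 'I_n * 'I_n}).
Hypothesis tv : t != v.
Hypothesis HD2 : dissection (V2 t v) D2.
Variables (a b i k : 'I_n).
Hypothesis Hab : ((a == t) && (b == v)) || ((a == v) && (b == t)).
Hypothesis Hi : i \in U1 t v.
Hypothesis Hk : k \in U2 t v.
Local Notation D := ((t, v) |: ((v, t) |: D2)).
Local Notation V2' := (V2 t v).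

Lemma bV : (b == t) || (b == v).
Proof. by case/orP: Hab => /andP [_ ->]; rewrite ?orbT. Qed.
Lemma aV : (a == t) || (a == v).
Proof. by case/orP: Hab => /andP [-> _]; rewrite ?orbT. Qed.
Lemma ab : a != b.
Proof. by case/orP: Hab => /andP [/eqP -> /eqP ->]; rewrite // eq_sym. Qed.
Lemma tvV1 x : (x == t) || (x == v) -> (x \in V1 t v) && (x \in V2').
Proof. by have /and4P [? ? ? ?] := tvV t v; case/orP => /eqP ->; apply/andP. Qed.
Lemma aV1 : a \in V1 t v. Proof. by case/andP: (tvV1 aV). Qed.
Lemma aV2 : a \in V2'. Proof. by case/andP: (tvV1 aV). Qed.
Lemma bV1 : b \in V1 t v. Proof. by case/andP: (tvV1 bV). Qed.
Lemma bV2 : b \in V2'. Proof. by case/andP: (tvV1 bV). Qed.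
Lemma iP : [&& i != t, i != v, i \in V1 t v & i \notin V2'].
Proof. exact: U1P. Qed.
Lemma kP : [&& k != t, k != v, k \in V2' & k \notin V1 t v].
Proof. exact: U2P. Qed.
Lemma iV2 : i \notin V2'. Proof. by case/and4P: iP. Qed.
Lemma iV1 : i \in V1 t v. Proof. by case/and4P: iP. Qed.
Lemma kV2 : k \in V2'. Proof. by case/and4P: kP. Qed.
Lemma xV2i x : x \in V2' -> x != i.
Proof. by move=> H; apply: contraNneq iV2 => <-. Qed.
Lemma ik : i != k. Proof. by rewrite eq_sym; apply: xV2i; exact: kV2. Qed.
Lemma bk : b != k.
Proof. by case/and4P: kP => kt kv _ _; case/orP: bV => /eqP ->; rewrite eq_sym. Qed.
Lemma ak : a != k.
Proof. by case/and4P: kP => kt kv _ _; case/orP: aV => /eqP ->; rewrite eq_sym. Qed.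
Lemma ia : i != a. Proof. by rewrite eq_sym; apply: xV2i; exact: aV2. Qed.

Lemma D2P e : e \in D2 -> [&& e.1 \in V2', e.2 \in V2' & e.1 != e.2].
Proof. by case: HD2 => H _ _ /H /and4P [-> -> -> _]. Qed.

Lemma tvD2 : ((t, v) \notin D2) && ((v, t) \notin D2).
Proof.
case: HD2 => H _ _; have /andP [N1 N2] := G7 tv.
apply/andP; split; apply/negP => /H /and4P [_ _ _] /=; by rewrite ?N1 ?N2.
Qed.

Lemma inD e : (e \in D) = [|| e == (t, v), e == (v, t) | e \in D2].
Proof. by rewrite !in_setU1. Qed.

Lemma D2D e : e \in D2 -> e \in D.
Proof. by rewrite inD => ->; rewrite !orbT. Qed.

Lemma DV e : e \in D -> (e.1 \in V2') && (e.2 \in V2').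
Proof.
have /and4P [_ _ tV2 vV2] := tvV t v.
rewrite inD => /or3P [/eqP -> | /eqP -> | /D2P /and3P [-> -> _]]; exact/andP.
Qed.

Lemma DnoB e : e \in D -> e.1 != b -> e.2 != b -> e \in D2.
Proof.
rewrite inD => /or3P [/eqP -> | /eqP -> | //] /=; case/orP: bV => /eqP ->;
  by rewrite ?eqxx.
Qed.

Lemma nocross_sub x y : [forall d in D, ~~ cross x y d.1 d.2] -> [forall d in D2, ~~ cross x y d.1 d.2].
Proof. by move=> /forall_inP H; apply/forall_inP => d /D2D /H. Qed.

Lemma NC1 p q : p \in V1 t v -> q \in V1 t v -> [forall d in D, ~~ cross p q d.1 d.2].
Proof. by move=> Hp Hq; apply/forall_inP => d /DV /andP [H1 H2]; exact: (G2 Hp Hq H1 H2). Qed.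

Lemma NC2 x y : x \in V2' -> y \in V2' -> [forall d in D2, ~~ cross x y d.1 d.2] ->
  [forall d in D, ~~ cross x y d.1 d.2].
Proof.
move=> Hx Hy /forall_inP H; apply/forall_inP => d.
have /and4P [tV1 vV1 tV2 vV2] := tvV t v.
rewrite inD => /or3P [/eqP -> | /eqP -> | /H //] /=; rewrite cross_sym.
- exact: (G2 tV1 vV1 Hx Hy).
- exact: (G2 vV1 tV1 Hx Hy).
Qed.

Definition good (e : 'I_n * 'I_n) := [&& e.1 \in V2', e.2 \in V2', e.1 != b & e.2 != b].

Lemma before_ib d e : good d -> before i d e = before b d e.
Proof.
case/and4P => H1 H2 H3 H4; rewrite /before /strict_side.
by rewrite (G4 bV H1 H2 H3 H4 Hi).
Qed.

Lemma noB d e : good d -> before i d e -> (e.1 != b) && (e.2 != b).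
Proof.
move=> Gd; have := Gd; case/and4P => H1 H2 H3 H4.
have Sb : strict_side d.1 d.2 i b.
  by rewrite /strict_side (G4 bV H1 H2 H3 H4 Hi) eqxx eq_sym H3 eq_sym H4.
case/and4P => N1 N2 _ _; apply/andP; split.
- by apply: contraNneq N1 => ->.
- by apply: contraNneq N2 => ->.
Qed.

Lemma noB_all d l : good d -> all (before i d) l -> all (fun e => (e.1 != b) && (e.2 != b)) l.
Proof. by move=> Gd /allP H; apply/allP => e /H; apply: noB. Qed.

Lemma good_of e : e \in D -> (e.1 != b) && (e.2 != b) -> good e.
Proof. by move=> /DV /andP [H1 H2] /andP [H3 H4]; rewrite /good H1 H2 H3 H4. Qed.

Lemma conv9 l : all (fun e => (e \in D) && cross i k e.1 e.2) l ->
  all (fun e => (e.1 != b) && (e.2 != b)) l ->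
  all (fun e => (e \in D2) && cross b k e.1 e.2) l.
Proof.
move=> /allP H1 /allP H2; apply/allP => e el.
have /andP [eD C] := H1 e el; have /andP [n1 n2] := H2 e el.
have /andP [v1 v2] := DV eD.
by rewrite (DnoB eD n1 n2) (G3 bV v1 v2 n1 n2 Hi Hk).
Qed.

Lemma conv9' l : all (fun e => (e \in D2) && cross b k e.1 e.2) l ->
  all (fun e => (e \in D) && cross i k e.1 e.2) l /\ all good l.
Proof.
move=> /allP H; split; apply/allP => e el; have /andP [eD C] := H e el;
  have /and3P [v1 v2 _] := D2P eD; have /and5P [n1 _ n2 _ _] := crossD C.
- by rewrite D2D // -(G3 bV v1 v2 n1 n2 Hi Hk).
- by rewrite /good v1 v2 n1 n2.
Qed.

Lemma conv10 l : all good l -> pairwise (before i) l -> pairwise (before b) l.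
Proof. by move=> G; apply: (pairwise_in G) => x y Gx _; rewrite before_ib. Qed.

Lemma conv10' l : all good l -> pairwise (before b) l -> pairwise (before i) l.
Proof. by move=> G; apply: (pairwise_in G) => x y Gx _; rewrite before_ib. Qed.


Definition Pp s := tp [set: 'I_n] D i k s && (nth i s 1 == a).
Definition Qq s := tp V2' D2 b k s.
Definition ff (s : seq 'I_n) := if nth i s 2 == b then drop 2 s else b :: behead s.
Definition gg (s : seq 'I_n) := if nth i s 1 == a then i :: behead s else [:: i, a & s].

Lemma allV2_of x r : x \in V2' -> last x r \in V2' ->
  all (fun e => e \in D) (odds (steps (x :: r))) -> all (fun y => y \in V2') (x :: r).
Proof.
move=> Hx Hl /allP H; apply/allP => y; rewrite in_cons => /orP [/eqP -> //|yr].
have := @vertex n (x :: r) x y yr; case=> [->//|[e He [->|->]]];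
  by have /andP [] := DV (H e He).
Qed.

Lemma all_consE (T : Type) (P : pred T) x l : all P (x :: l) = P x && all P l.
Proof. by []. Qed.

Lemma allD l : all (fun e => (e \in D) && cross i k e.1 e.2) l -> all (fun e => e \in D) l.
Proof. by apply: sub_all => e /andP []. Qed.

Lemma setof_sym (x y : 'I_n) : setof (x, y) = setof (y, x).
Proof. by rewrite /setof /= setUC. Qed.

Lemma setof_mem (x : 'I_n) (e : 'I_n * 'I_n) : x \in setof e -> (x == e.1) || (x == e.2).
Proof. by rewrite /setof !inE. Qed.

Lemma HO_A p3 r :
  uniq [seq setof e | e <- steps [:: b, p3 & r]] ->
  all (fun e => e.1 != e.2) (steps [:: b, p3 & r]) ->
  all (fun e => (e \in D) && cross i k e.1 e.2) (odds (steps [:: b, p3 & r])) ->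
  pairwise (before i) (odds (steps [:: b, p3 & r])) ->
  all (fun e => (e.1 != b) && (e.2 != b)) (odds (steps [:: b, p3 & r])).
Proof.
case: r => [|p4 r] //; rewrite !steps_cc odds_cc.
rewrite map_cons cons_uniq => /andP [U1 _] /= /andP [bp3 _] /andP [/andP [D0 _] _].
move=> /andP [B0 _].
have p3b : p3 != b by rewrite eq_sym.
have p4b : p4 != b.
  apply: contraNneq U1 => E; rewrite map_cons in_cons; apply/orP; left.
  by rewrite E setof_sym.
have G0 : good (p3, p4) by apply: good_of => //; rewrite p3b p4b.
by rewrite p3b p4b /=; apply: (noB_all G0).
Qed.



Lemma PQ s : Pp s -> Qq (ff s).
Proof.
move=> /andP [T Ha].
case/and5P: T => h1 h2 h3 h4 /and5P [h5 h6 h7 h8 /andP [h9 h10]].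
clear h5 h4; case: s h1 h2 Ha h3 h6 h7 h8 h9 h10 => [|x [|y r]] // _ /eqP Ex /eqP Ey h3 h6 h7 h8 h9 h10.
have Ex1 : x = i := Ex. have Ey1 : y = a := Ey. clear Ex Ey; subst x y.
case: r h3 h6 h7 h8 h9 h10 => [|q r] h3 h6 h7 h8 h9 h10.
  by move: h3 => /=; rewrite (negbTE ak).
move: h6; rewrite steps_cc all_consE => /andP [_ h6].
move: h7; rewrite steps_cc map_cons cons_uniq => /andP [h7a h7].
move: h8; rewrite steps_cc all_consE => /andP [_ h8].
move: h9; rewrite !steps_cc odds_cc all_consE => /andP [/andP [D0 C0] h9].
move: h10; rewrite !steps_cc odds_cc pairwise_cons => /andP [h10a h10].
rewrite /ff /=.
case: eqP => [qb | /eqP qb].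
-
  subst q.
  case: r h3 h6 h7 h7a h8 h9 h10 h10a => [|p3 r] h3 h6 h7 h7a h8 h9 h10 h10a.
    by move: h3 => /=; rewrite (negbTE bk).
  move: h6; rewrite steps_cc all_consE => /andP [_ h6].
  move: h7; rewrite steps_cc map_cons cons_uniq => /andP [_ h7].
  move: h8; rewrite steps_cc all_consE => /andP [_ h8].
  have HO := HO_A h7 h6 h9 h10.
  rewrite /Qq /tp; apply/and5P; split => //; first by rewrite bk.
  apply/and5P; split => //.
  + apply: allV2_of; [exact: bV2 | by move: h3 => /= /eqP ->; exact: kV2 | exact: allD h9].
  + apply/allP => e /(allP h8); exact: nocross_sub.
  + apply/andP; split; first exact: conv9.
    apply: conv10 => //; apply/allP => e eO; apply: good_of.
      by have /andP [] := allP h9 e eO.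
    exact: (allP HO).
-
  have G0 : good (a, q).
    apply: good_of => //; rewrite /= qb andbT; exact: ab.
  have HO : all (fun e => (e.1 != b) && (e.2 != b)) (odds (steps (q :: r))).
    exact: (noB_all G0 h10a).
  have Hbs : b \notin q :: r.
    apply/negP => bin.
    have := @vertex n [:: i, a, q & r] i b; rewrite /= in_cons bin orbT => /(_ isT).
    case=> [E|[e]].
      by move: h3; rewrite /= -E (negbTE bk).
    rewrite !steps_cc odds_cc in_cons => /orP [/eqP -> /= [E|E]|eO].
    + by move: ab; rewrite E eqxx.
    + by move: qb; rewrite E eqxx.
    + by have /andP [B1 B2] := allP HO e eO; case=> E; [move: B1|move: B2]; rewrite -E eqxx.
  rewrite /Qq /tp; apply/and5P; split => //; first by rewrite bk.
  apply/and5P; split => //.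
  + apply: allV2_of; [exact: bV2 | by move: h3 => /= /eqP ->; exact: kV2 |].
    rewrite !steps_cc odds_cc all_consE D0 /=; exact: allD h9.
  + by rewrite steps_cc all_consE /= eq_sym ab.
  + rewrite steps_cc map_cons cons_uniq h7 andbT.
    apply/mapP => -[e eS E].
    have /andP [m1 m2] := mem_steps eS.
    have : b \in setof e by rewrite -E /setof !inE eqxx ?orbT.
    case/setof_mem/orP => /eqP E2; [move: m1|move: m2]; rewrite -E2 in_cons eq_sym (negbTE ab) /=;
      by rewrite (negbTE Hbs).
  + rewrite steps_cc all_consE; apply/andP; split; last first.
      by apply/allP => e /(allP h8); exact: nocross_sub.
    by apply: nocross_sub; apply: NC1; [exact: bV1 | exact: aV1].
  + rewrite !steps_cc odds_cc; apply/andP; split.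
      apply: conv9; first by rewrite all_consE D0 C0 h9.
      by rewrite all_consE HO andbT; case/and4P: G0 => _ _ -> ->.
    apply: conv10; last by rewrite pairwise_cons h10a h10.
    rewrite all_consE G0 /=; apply/allP => e eO; apply: good_of.
      by have /andP [] := allP h9 e eO.
    exact: (allP HO).
Qed.

Lemma QbR r : Qq (b :: r) -> b \notin r.
Proof.
case/and5P => h1 h2 h3 h4 /and5P [h5 h6 h7 h8 /andP [h9 h10]].
apply/negP => br; case: (@vertex n (b :: r) b b br) => [E|[e eO E]].
  by move: h3; rewrite -E (negbTE bk).
have [_ /allP G] := conv9' h9; have /and4P [_ _ n1 n2] := G e eO.
by case: E => E; [move: n1|move: n2]; rewrite -E eqxx.
Qed.

Lemma Qshape s : Qq s -> exists q r, s = [:: b, q & r].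
Proof.
case/and5P => h1 h2 _ _ _; case: s h1 h2 => [|x [|q r]] // _ /eqP Ex.
by exists q, r; congr (_ :: _).
Qed.

Lemma setof_notin x y L : x \notin V2' -> (forall e, e \in L -> (e.1 \in V2') && (e.2 \in V2')) ->
  setof (x, y) \notin [seq setof e | e <- L].
Proof.
move=> xV H; apply/mapP => -[e eL E].
have : x \in setof e by rewrite -E /setof !inE eqxx ?orbT.
have /andP [m1 m2] := H e eL.
by case/setof_mem/orP => /eqP E2; [move: m1|move: m2]; rewrite -E2 (negbTE xV).
Qed.

Lemma stepsV2 s e : all (fun x => x \in V2') s -> e \in steps s -> (e.1 \in V2') && (e.2 \in V2').
Proof.
by move=> /allP H /mem_steps /andP [m1 m2]; rewrite H // H.
Qed.

Lemma QP s : Qq s -> Pp (gg s).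
Proof.
move=> Qs; have bR := Qs; have [q [r Es]] := Qshape Qs; subst s.
have HbR := QbR bR.
case/and5P: Qs => h1 h2 h3 h4 /and5P [h5 h6 h7 h8 /andP [h9 h10]].
have [h9' G] := conv9' h9.
rewrite /gg /=.
case: eqP => [qa | /eqP qa].
- subst q.
  have Eo : odds (steps [:: i, a & r]) = odds (steps [:: b, a & r]) by rewrite !steps_cc.
  rewrite /Pp; apply/andP; split; last exact: eqxx.
  rewrite /tp; apply/and5P; split => //; first exact: ik.
  apply/and5P; split.
  + by apply/allP => y _; exact: in_setT.
  + move: h6; rewrite !steps_cc !all_consE => /andP [_ ->]; rewrite andbT; exact: ia.
  + move: h7; rewrite !steps_cc !map_cons !cons_uniq => /andP [_ ->]; rewrite andbT.
    apply: setof_notin; first exact: iV2.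
    move=> e eS; apply: stepsV2 eS; by move: h5; rewrite all_consE => /andP [].
  + rewrite steps_cc all_consE; apply/andP; split.
      by apply: NC1; [exact: iV1 | exact: aV1].
    move: h8; rewrite steps_cc all_consE => /andP [_ /allP H8]; apply/allP => e eS.
    have /andP [e1 e2] : (e.1 \in V2') && (e.2 \in V2').
      by apply: stepsV2 eS; move: h5; rewrite all_consE => /andP [].
    exact: NC2 (H8 e eS).
  + by rewrite Eo h9' conv10'.
- rewrite /Pp; apply/andP; split; last exact: eqxx.
  rewrite /tp; apply/and5P; split => //; first exact: ik.
  have Eo : odds (steps [:: i, a, b, q & r]) = (a, b) :: odds (steps [:: b, q & r]).
    by rewrite !steps_cc odds_cc.
  apply/and5P; split.
  + by apply/allP => y _; exact: in_setT.
  + rewrite 2!steps_cc 2!all_consE h6 andbT; apply/andP; split; [exact: ia | exact: ab].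
  + rewrite 2!steps_cc 2!map_cons 2!cons_uniq h7 andbT; apply/andP; split.
      rewrite -map_cons; apply: setof_notin; first exact: iV2.
      move=> e; rewrite in_cons => /orP [/eqP -> /=|eS]; first by rewrite aV2 bV2.
      exact: stepsV2 h5 eS.
    apply/mapP => -[e eS E].
    have : a \in setof e by rewrite -E /setof !inE eqxx ?orbT.
    have : b \in setof e by rewrite -E /setof !inE eqxx ?orbT.
    move: eS; rewrite steps_cc in_cons => /orP [/eqP -> | eS].
      by move=> _ /setof_mem /orP [] /eqP E2; [move: ab|move: qa]; rewrite E2 eqxx.
    have /andP [m1 m2] := mem_steps eS.
    by case/setof_mem/orP => /eqP E2; [move: m1|move: m2]; rewrite -E2 (negbTE HbR).
  + rewrite 2!steps_cc 2!all_consE; apply/and3P; split.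
    * by apply: NC1; [exact: iV1 | exact: aV1].
    * by apply: NC1; [exact: aV1 | exact: bV1].
    * apply/allP => e eS; have /andP [e1 e2] := stepsV2 h5 eS.
      exact: NC2 (allP h8 e eS).
  + rewrite Eo all_consE pairwise_cons h9' conv10' // andbT /=.
    have [C1 C2] : cross i k t v /\ cross i k v t by case/andP: (G1 Hi Hk).
    have /andP [nD1 nD2] := tvD2.
    apply/andP; split.
      by case/orP: Hab => /andP [/eqP E1 /eqP E2]; rewrite E1 E2 inD eqxx ?orbT.
    rewrite andbT; apply/allP => e eO.
    have /andP [eD _] := allP h9 e eO.
    have /and3P [v1 v2 _] := D2P eD.
    have /andP [S1 S1'] := G5 v1 Hi; have /andP [S2 S2'] := G5 v2 Hi.
    have ne1 : e != (t, v) by apply: contraNneq nD1 => <-.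
    have ne2 : e != (v, t) by apply: contraNneq nD2 => <-.
    by case/orP: Hab => /andP [/eqP E1 /eqP E2]; rewrite E1 E2 /before /= ?S1 ?S2 ?S1' ?S2' ne1 ne2.
Qed.

Lemma gf s : Pp s -> gg (ff s) = s.
Proof.
move=> /andP [T Ha].
case/and5P: T => h1 h2 h3 h4 /and5P [h5 h6 h7 h8 /andP [h9 h10]].
clear h5 h4 h6 h8 h9 h10; case: s h1 h2 Ha h3 h7 => [|x [|y r]] // _ /eqP Ex /eqP Ey h3 h7.
have Ex1 : x = i := Ex. have Ey1 : y = a := Ey. clear Ex Ey; subst x y.
case: r h3 h7 => [|q r] h3 h7.
  by move: h3 => /=; rewrite (negbTE ak).
rewrite /ff /=; case: eqP => [qb | /eqP qb]; last by rewrite /gg /= eqxx.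
subst q; case: r h3 h7 => [|p3 r] h3 h7.
  by move: h3 => /=; rewrite (negbTE bk).
rewrite /gg /=; case: eqP => // p3a; subst p3.
move: h7; rewrite !steps_cc !map_cons !cons_uniq !in_cons => /andP [_ /andP [/norP [+ _] _]].
by rewrite setof_sym eqxx.
Qed.

Lemma fg s : Qq s -> ff (gg s) = s.
Proof.
move=> Qs; have bR := Qs; have [q [r Es]] := Qshape Qs; subst s.
have HbR := QbR bR.
rewrite /gg /=; case: eqP => [qa | /eqP qa]; last by rewrite /ff /= eqxx.
subst q; rewrite /ff /=.
clear Qs bR; case: r HbR => [|q2 r] HbR /=.
  by rewrite eq_sym (negbTE (xV2i bV2)).
move: HbR; rewrite !in_cons negb_or => /andP [_ /norP [bq2 _]].
by rewrite eq_sym (negbTE bq2).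
Qed.

Lemma weight (R : unitRingType) (c : 'I_n -> 'I_n -> R) s :
  c b a \is a GRing.unit -> Qq s -> tweight c (gg s) = (c i a * (c b a)^-1 * tweight c s)%R.
Proof.
move=> U Qs; have bR := Qs; have [q [r Es]] := Qshape Qs; subst s.
rewrite /gg /=; case: eqP => [qa | //]; subst q.
clear Qs; case: r bR => [|q2 r] bR.
  by case/and5P: bR => _ _ /=; rewrite (negbTE ak).
by rewrite /= -!mulrA mulKr.
Qed.

Lemma Pmem s : Pp s -> s \in LL n (tpath_bound n).
Proof.
by case/andP => /and5P [_ _ _ _ /and5P [_ _ h7 _ _]] _; rewrite mem_LL; apply: size_bound.
Qed.

Lemma Qmem s : Qq s -> s \in LL n (tpath_bound n).
Proof.
by case/and5P => _ _ _ _ /and5P [_ _ h7 _ _]; rewrite mem_LL; apply: size_bound.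
Qed.

Lemma half_sum (R : unitRingType) (c : 'I_n -> 'I_n -> R) :
  c b a \is a GRing.unit ->
  (\sum_(s <- LL n (tpath_bound n) | Pp s) tweight c s =
   c i a * (c b a)^-1 * \sum_(s <- LL n (tpath_bound n) | Qq s) tweight c s)%R.
Proof.
move=> U; rewrite mulr_sumr.
apply: (sum_bij (f := ff) (g := gg)).
- exact: uniq_LL.
- exact: Pmem.
- exact: Qmem.
- exact: PQ.
- exact: QP.
- exact: gf.
- exact: fg.
- by move=> s Ps; rewrite -{1}(gf Ps) weight // PQ.
Qed.

End Core.

Lemma F1 n (t v : 'I_n) D2 i k s : dissection (V2 t v) D2 -> i \in U1 t v -> k \in U2 t v ->
  tp [set: 'I_n] ((t, v) |: ((v, t) |: D2)) i k s -> (nth i s 1 == t) || (nth i s 1 == v).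
Proof.
move=> HD2 Hi Hk; case/and5P => h1 h2 h3 _ /and5P [_ _ _ h8 /andP [h9 _]].
case: s h1 h2 h3 h8 h9 => [|x [|y r]] // _ /eqP Ex h3 h8 h9.
have Ex1 : x = i := Ex; clear Ex; subst x.
have /andP [C1 _] := G1 Hi Hk.
have tvD : (t, v) \in (t, v) |: ((v, t) |: D2) by rewrite !in_setU1 eqxx.
move: h8; rewrite steps_cc all_consE => /andP [/forall_inP /(_ _ tvD) /= NC _].
case: r h3 h9 => [|q r] h3 h9.
  have Ey : y = k := eqP h3.
  by move: NC; rewrite Ey C1.
move: h9; rewrite !steps_cc odds_cc all_consE => /andP [/andP [yqD _] _].
have /andP [yV _] := DV HD2 yqD.
case: (boolP ((y == t) || (y == v))) => // /norP [yt yv].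
have /andP [C _] := G1 Hi (U2I yV yt yv).
by move: NC; rewrite C.
Qed.

Unset Implicit Arguments.

Theorem lemma2p8 (R : unitRingType) (n : nat) (t v : 'I_n)
    (D2 : {set 'I_n * 'I_n}) (c : 'I_n -> 'I_n -> R) :
  (3 <= n)%N ->
  internal_diag [set: 'I_n] (t, v) ->
  dissection (V2 t v) D2 ->
  (forall rs, rs \in (t, v) |: ((v, t) |: D2) -> c rs.1 rs.2 \is a GRing.unit) ->
  (forall i k, i \in V2 t v -> k \in V2 t v -> i != k ->
     c i k = tsum (V2 t v) D2 c i k) ->
  weak_frieze c [set (t, v); (v, t)] ->
  forall i k, i \in U1 t v -> k \in U2 t v ->
    c i k = tsum [set: 'I_n] ((t, v) |: ((v, t) |: D2)) c i k.
Proof.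
move=> _ Itv HD2 Hunit Htp [_ WF] i k Hi Hk.
have tv : t != v by case/and4P: Itv.
have Uvt : c v t \is a GRing.unit by apply: (Hunit (v, t)); rewrite !in_setU1 eqxx orbT.
have Utv : c t v \is a GRing.unit by apply: (Hunit (t, v)); rewrite !in_setU1 eqxx.
have /and4P [_ _ tV2 vV2] := tvV t v.
have /and4P [kt kv kV2 _] := U2P Hk.
have TS : forall b, b \in V2 t v -> b != k ->
    c b k = (\sum_(s <- LL n (tpath_bound n) | Qq t v D2 b k s) tweight c s)%R.
  move=> b bV bk; rewrite (Htp b k bV kV2 bk) tsumL.
  by apply: eq_bigl => s; rewrite tpE.
rewrite tsumL (eq_bigl (tp [set: 'I_n] ((t, v) |: ((v, t) |: D2)) i k)); last first.
  by move=> s; rewrite tpE.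
rewrite (bigID (fun s => nth i s 1 == t)) /=.
have E1 : forall s, tp [set: 'I_n] ((t, v) |: ((v, t) |: D2)) i k s && (nth i s 1 == t)
   = Pp t v D2 t i k s by [].
have E2 : forall s, tp [set: 'I_n] ((t, v) |: ((v, t) |: D2)) i k s && ~~ (nth i s 1 == t)
   = Pp t v D2 v i k s.
  move=> s; rewrite /Pp; case E: (tp _ _ _ _ s) => //=.
  have := F1 HD2 Hi Hk E; case: eqP => [-> _|_ /= ->] //.
  by rewrite (negbTE tv).
rewrite (eq_bigl _ _ E1) (eq_bigl _ _ E2).
have Htv : (t == t) && (v == v) || (t == v) && (v == t) by rewrite !eqxx.
have Hvt : (v == t) && (t == v) || (v == v) && (t == t) by rewrite !eqxx orbT.
rewrite (half_sum tv HD2 Htv Hi Hk Uvt) (half_sum tv HD2 Hvt Hi Hk Utv).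
rewrite -(TS v vV2) 1?eq_sym // -(TS t tV2) 1?eq_sym //.
apply: (WF i k t v); [by rewrite !inE eqxx | by rewrite !inE !eqxx orbT | by case/andP: (G1 Hi Hk)].
Qed.
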